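(* Let $G>I$ be a finite group with $Z(G)=I$ and let $\sigma_1,\sigma_2\in G$ with $G=\langle\sigma_1,\sigma_2\rangle$, $\sigma_1\sigma_2\sigma_1=\sigma_2\sigma_1\sigma_2$ and $o(\sigma_1\sigma_2\sigma_1)=2$. Let $C=[\sigma_1]$ and $D=[\sigma_1\sigma_2\sigma_1]$ (conjugacy classes). Put $h_1=[\sigma_1,\sigma_2,\sigma_1,\sigma_1\sigma_2\sigma_1]$, $h_2=[\sigma_2\sigma_1\sigma_2^{-1},\sigma_2,\sigma_1,\sigma_2\sigma_1^2]$, $h_3=[\sigma_2,\sigma_1,\sigma_1,\sigma_2\sigma_1^2]$, $h_4=[\sigma_2,\sigma_2,\sigma_1,\sigma_2^2\sigma_1]$. Then $Z_4=\{h_1\}^{B_4}=\{h_1,h_2,h_3,h_4\}\subseteq\Sigma^i(C,C,C,D)$ is an orbit of length $4$ under $B_4$, with (identifying $h_i$ with $i$) $\rho_4(\beta_{12})=(1,2,3)(4)$, $\rho_4(\beta_{13})=(1,3,4)(2)$, $\rho_4(\beta_{14})=(1,4,2)(3)$, $\rho_4(B_4)\cong A_4$, and genus $g_{Z_4}=0$.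
   Context: $\iota$ is the identity and $I$ the trivial group. $\Sigma^i(C_1,\dots,C_4)$ is the set of $G$-conjugacy classes $[\sigma_1,\dots,\sigma_4]$ (simultaneous conjugation) of tuples with $\sigma_j\in C_j$, $\langle\sigma_1,\dots,\sigma_4\rangle=G$, $\sigma_1\sigma_2\sigma_3\sigma_4=\iota$. Braids act from the right: $[\underline{\sigma}]^{\beta_2}=[\sigma_1\sigma_2\sigma_1^{-1},\sigma_1,\sigma_3,\sigma_4]$, $[\underline{\sigma}]^{\beta_3}=[\sigma_1,\sigma_2\sigma_3\sigma_2^{-1},\sigma_2,\sigma_4]$, $[\underline{\sigma}]^{\beta_4}=[\sigma_1,\sigma_2,\sigma_3\sigma_4\sigma_3^{-1},\sigma_3]$. The pure braid group $B_4$ is generated by $\beta_{12}=\beta_2^2$, $\beta_{13}=\beta_2^{-1}\beta_3^2\beta_2$, $\beta_{14}=\beta_2^{-1}\beta_3^{-1}\beta_4^2\beta_3\beta_2$, $\beta_{23}=\beta_3^2$, $\beta_{24}=\beta_3^{-1}\beta_4^2\beta_3$, $\beta_{34}=\beta_4^2$; $\rho_4$ is the induced permutation representation. For a $B_4$-orbit $Z$, $g_Z=1-|Z|+\frac12(3|Z|-z_{12}-z_{13}-z_{14})$ with $z_{1j}$ the number of cycles (fixed points included) of $\rho_4(\beta_{1j})$ on $Z$. *)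

(* Defs.v *)
From HB Require Import structures.
From mathcomp Require Import all_boot all_order all_algebra all_fingroup all_solvable.
Set Implicit Arguments. Unset Strict Implicit. Unset Printing Implicit Defensive.
Import GRing.Theory.

Section Braid.
Variable gT : finGroupType.
Local Open Scope group_scope.

Definition T4 := (gT * gT * gT * gT)%type.

Definition tconj (t : T4) (g : gT) : T4 :=
  let: (a, b, c, d) := t in (a ^ g, b ^ g, c ^ g, d ^ g).

Definition tcls (G : {set gT}) (t : T4) : {set T4} := [set tconj t g | g in G].

Definition inSigma (G C1 C2 C3 C4 : {set gT}) (X : {set T4}) : Prop :=
  exists a b c d : gT,
    [/\ X = tcls G (a, b, c, d),
        [/\ a \in C1, b \in C2, c \in C3 & d \in C4],
        <<[set a; b; c; d]>> = G
      & a * b * c * d = 1].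

(* Artin generators beta_2, beta_3, beta_4 (right action) and their inverses.
   A generator is a pair (k, inv) with k in {0,1,2} standing for beta_{k+2}. *)
Definition beta (k : 'I_3) (inv : bool) (t : T4) : T4 :=
  let: (a, b, c, d) := t in
  match val k, inv with
  | 0, false => (a * b * a^-1, a, c, d)
  | 0, true  => (b, b^-1 * a * b, c, d)
  | 1, false => (a, b * c * b^-1, b, d)
  | 1, true  => (a, c, c^-1 * b * c, d)
  | _, false => (a, b, c * d * c^-1, c)
  | _, true  => (a, b, d, d^-1 * c * d)
  end.

Definition act_word (w : seq ('I_3 * bool)) (t : T4) : T4 :=
  foldl (fun t g => beta g.1 g.2 t) t w.

Definition b2 : 'I_3 := @Ordinal 3 0 isT.
Definition b3 : 'I_3 := @Ordinal 3 1 isT.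
Definition b4 : 'I_3 := @Ordinal 3 2 isT.

(* pure braid generators: 0 = beta12, 1 = beta13, 2 = beta14,
   3 = beta23, 4 = beta24, 5 = beta34 *)
Definition pure_word (j : 'I_6) : seq ('I_3 * bool) :=
  match val j with
  | 0 => [:: (b2, false); (b2, false)]
  | 1 => [:: (b2, true); (b3, false); (b3, false); (b2, false)]
  | 2 => [:: (b2, true); (b3, true); (b4, false); (b4, false); (b3, false); (b2, false)]
  | 3 => [:: (b3, false); (b3, false)]
  | 4 => [:: (b3, true); (b4, false); (b4, false); (b3, false)]
  | _ => [:: (b4, false); (b4, false)]
  end.

Definition inv_word (w : seq ('I_3 * bool)) : seq ('I_3 * bool) :=
  rev [seq (g.1, ~~ g.2) | g <- w].

Definition pure_to_word (w : seq ('I_6 * bool)) : seq ('I_3 * bool) :=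
  flatten [seq (if e.2 then inv_word (pure_word e.1) else pure_word e.1) | e <- w].

Definition act_cls (w : seq ('I_3 * bool)) (X : {set T4}) : {set T4} :=
  [set act_word w t | t in X].

Definition act_pure (w : seq ('I_6 * bool)) (X : {set T4}) : {set T4} :=
  act_cls (pure_to_word w) X.

(* the tuples h_1, ..., h_4 (indexed 0..3) *)
Definition htuple (s1 s2 : gT) (i : 'I_4) : T4 :=
  match val i with
  | 0 => (s1, s2, s1, s1 * s2 * s1)
  | 1 => (s2 * s1 * s2^-1, s2, s1, s2 * s1 ^+ 2)
  | 2 => (s2, s1, s1, s2 * s1 ^+ 2)
  | _ => (s2, s2, s1, s2 ^+ 2 * s1)
  end.

End Braid.

Local Open Scope ring_scope.
Definition genusZ (n z12 z13 z14 : nat) : rat :=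
  1 - n%:R + (3 * n%:R - z12%:R - z13%:R - z14%:R) / 2.

Definition i4 (k : nat) : 'I_4 := inord k.
Definition j6 (k : nat) : 'I_6 := inord k.

(* Main.v *)
Require Import Defs.
From HB Require Import structures.
From mathcomp Require Import all_boot all_order all_algebra all_fingroup all_solvable.
Set Implicit Arguments. Unset Strict Implicit. Unset Printing Implicit Defensive.

Local Open Scope group_scope.



Section Gen.
Variable gT : finGroupType.
Implicit Types (t : T4 gT) (G : {group gT}).

Lemma beta_conj k b t g : beta k b (tconj t g) = tconj (beta k b t) g.
Proof.
case: t => [[[a c] d] e]; case: k => [[|[|[|k]]] Hk]; case: b;
  by rewrite /= ?conjMg ?conjVg.
Qed.

Lemma act_word_conj w t g : act_word w (tconj t g) = tconj (act_word w t) g.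
Proof. elim: w t => [|[k b] w IH] t //=. rewrite beta_conj; exact: IH. Qed.

Lemma tconjM t g h : tconj t (g * h) = tconj (tconj t g) h.
Proof. by case: t => [[[a b] c] d]; rewrite /= !conjgM. Qed.

Lemma tconj1 t : tconj t 1 = t.
Proof. by case: t => [[[a b] c] d]; rewrite /= !conjg1. Qed.

Lemma tcls_conj G t g : g \in G -> tcls G (tconj t g) = tcls G t.
Proof.
move=> gG; apply/setP=> x; apply/imsetP/imsetP => [[h hG ->]|[h hG ->]].
  by exists (g * h); rewrite ?groupM // tconjM.
by exists (g^-1 * h); rewrite ?groupM ?groupV // -tconjM mulKVg.
Qed.

Lemma tcls_refl G t : t \in tcls G t.
Proof. by apply/imsetP; exists 1; rewrite ?group1 ?tconj1. Qed.

Lemma act_cls_tcls G w t : act_cls w (tcls G t) = tcls G (act_word w t).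
Proof.
rewrite /act_cls /tcls -imset_comp; apply: eq_imset => g /=.
by rewrite act_word_conj.
Qed.

Lemma act_word_cat w1 w2 t : act_word (w1 ++ w2) t = act_word w2 (act_word w1 t).
Proof. by rewrite /act_word foldl_cat. Qed.

Lemma act_cls_cat w1 w2 (X : {set T4 gT}) :
  act_cls (w1 ++ w2) X = act_cls w2 (act_cls w1 X).
Proof. rewrite /act_cls -imset_comp; apply: eq_imset => x; exact: act_word_cat. Qed.

Lemma act_cls_nil (X : {set T4 gT}) : act_cls [::] X = X.
Proof. rewrite /act_cls; exact: imset_id. Qed.

Lemma act_pure_nil (X : {set T4 gT}) : act_pure [::] X = X.
Proof. exact: act_cls_nil. Qed.

Lemma act_pure_cons e w (X : {set T4 gT}) :
  act_pure (e :: w) X = act_pure w (act_pure [:: e] X).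
Proof. by rewrite /act_pure /pure_to_word /= cats0 act_cls_cat. Qed.

Lemma beta_inv k b t : beta k (~~ b) (beta k b t) = t.
Proof.
case: t => [[[a c] d] e]; case: k => [[|[|[|k]]] Hk]; case: b => /=;
  by rewrite !mulgA ?mulVg ?mulgV ?mul1g ?mulgK ?mulgKV.
Qed.

Lemma act_word_inv w t : act_word (inv_word w) (act_word w t) = t.
Proof.
elim: w t => [|[k b] w IH] t //.
have -> : act_word ((k, b) :: w) t = act_word w (beta k b t) by [].
rewrite /inv_word map_cons rev_cons -cats1 act_word_cat -/(inv_word w) IH /=.
exact: beta_inv.
Qed.

Definition bits t : bool * bool * bool :=
  let: (a, b, c, _) := t in (a == b, a == c, b == c).

Lemma bits_conj t g : bits (tconj t g) = bits t.
Proof. by case: t => [[[a b] c] d]; rewrite /= !(inj_eq (@conjg_inj _ g)). Qed.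

Lemma bits_cls G t1 t2 : tcls G t1 = tcls G t2 -> bits t1 = bits t2.
Proof.
move=> e; have := tcls_refl G t1; rewrite e => /imsetP [g _ ->].
exact: bits_conj.
Qed.

End Gen.



Definition o4 (k : nat) : 'I_4 := match k with 0 => @Ordinal 4 0 isT | 1 => @Ordinal 4 1 isT | 2 => @Ordinal 4 2 isT | _ => @Ordinal 4 3 isT end.
Definition rhof (j i : nat) : 'I_4 := o4 (match j, i with
 | 0, 0 => 1 | 0, 1 => 2 | 0, 2 => 0 | 0, _ => 3
 | 1, 0 => 2 | 1, 1 => 1 | 1, 2 => 3 | 1, _ => 0
 | 2, 0 => 3 | 2, 1 => 0 | 2, 2 => 2 | 2, _ => 1
 | 3, 0 => 3 | 3, 1 => 0 | 3, 2 => 2 | 3, _ => 1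
 | 4, 0 => 0 | 4, 1 => 3 | 4, 2 => 1 | 4, _ => 2
 | _, 0 => 1 | _, 1 => 2 | _, 2 => 0 | _, _ => 3 end).

Section Norm.
Variables (gT : finGroupType) (t u : gT).
Hypotheses (Htt : t * t = 1) (Huuu : u * u * u = 1).

Lemma tV : t^-1 = t. Proof. by rewrite -[t^-1]mulg1 -Htt mulKg. Qed.
Lemma uV : u^-1 = u * u. Proof. by rewrite -[u^-1]mulg1 -Huuu -mulgA mulKg. Qed.
Lemma Lt a : a * t * t = a. Proof. by rewrite -mulgA Htt mulg1. Qed.
Lemma Lu a : a * u * u * u = a. Proof. by rewrite -[RHS]mulg1 -Huuu !mulgA. Qed.

Definition gw (j i : nat) : gT := match j, i with
 | 0, 0 => t * u | 0, 1 => 1 | 0, 2 => u * u * t | 0, _ => 1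
 | 1, 0 => t * u * t | 1, 1 => 1 | 1, 2 => t*u*u*t*u*u*t | 1, _ => u * t
 | 2, 0 => 1 | 2, 1 => 1 | 2, 2 => u*u*t*u*u*t | 2, _ => 1
 | 3, 0 => t*u*u*t | 3, 1 => t*u*u*t | 3, 2 => 1 | 3, _ => t*u*u*t
 | 4, 0 => u*u*t*u*u*t | 4, 1 => u*u*t | 4, 2 => t*u | 4, _ => 1
 | _, 0 => t*u*u | _, 1 => t*u*t | _, 2 => t | _, _ => t*u*u*t*u*u end.

Inductive ex := Et | Eu | E1 | Em of ex & ex.
Fixpoint den (e : ex) : gT := match e with
 | Et => t | Eu => u | E1 => 1 | Em a b => den a * den b end.
Fixpoint flat (e : ex) : seq bool := match e with
 | Et => [:: true] | Eu => [:: false] | E1 => [::] | Em a b => flat a ++ flat b end.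
Definition ev (s : seq bool) : gT := foldr (fun b acc => (if b then t else u) * acc) 1 s.
Lemma ev_cat s1 s2 : ev (s1 ++ s2) = ev s1 * ev s2.
Proof. elim: s1 => [|b s IH] /=; first by rewrite mul1g. by rewrite IH mulgA. Qed.
Lemma den_flat e : den e = ev (flat e).
Proof. elim: e => [| | |a IHa b IHb] /=; rewrite ?mulg1 //. by rewrite ev_cat IHa IHb. Qed.
Definition push (b : bool) (r : seq bool) := match b, r with
 | true, true :: r' => r' | false, false :: false :: r' => r' | _, _ => b :: r end.
Definition red (s : seq bool) := foldr push [::] s.
Lemma ev_push b r : ev (push b r) = ev (b :: r).
Proof.
case: b; case: r => [|[] r] //=; first by rewrite mulgA Htt mul1g.
case: r => [|[] r] //=. by rewrite !mulgA Huuu mul1g.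
Qed.
Lemma ev_red s : ev (red s) = ev s.
Proof. elim: s => [|b s IH] //=. by rewrite ev_push /= IH. Qed.
Lemma solve_eq e1 e2 : red (flat e1) = red (flat e2) -> den e1 = den e2.
Proof. by move=> e; rewrite !den_flat -(ev_red (flat e1)) e ev_red. Qed.

End Norm.

Lemma tup4 (T : Type) (a1 a2 a3 a4 b1 b2 b3 b4 : T) :
  a1 = b1 -> a2 = b2 -> a3 = b3 -> a4 = b4 -> (a1, a2, a3, a4) = (b1, b2, b3, b4).
Proof. by move=> -> -> -> ->. Qed.

Ltac reify t u e := lazymatch e with
 | @mulg _ ?a ?b => let ra := reify t u a in let rb := reify t u b in constr:(Em ra rb)
 | @oneg _ => constr:(E1)
 | t => constr:(Et)
 | u => constr:(Eu)
 end.

Ltac geq t u Htt Huuu := lazymatch goal with |- ?a = ?b =>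
  let ra := reify t u a in let rb := reify t u b in
  apply: (@solve_eq _ t u Htt Huuu ra rb); vm_compute; reflexivity end.

Ltac gpre t u Htt Huuu :=
  rewrite ?expgS ?expg0 ?conjgE ?invMg ?invgK ?invg1 ?(tV Htt) ?(uV Huuu).

Lemma core (gT : finGroupType) (t u : gT) (Htt : t * t = 1) (Huuu : u * u * u = 1)
  (j : 'I_6) (i : 'I_4) :
  act_word (pure_word j) (htuple (u^-1 * t) (t * u * u) i) =
  tconj (htuple (u^-1 * t) (t * u * u) (rhof j i)) (gw t u j i).
Proof.
case: j => [[|[|[|[|[|[|//]]]]]] Hj]; case: i => [[|[|[|[|//]]]] Hi];
rewrite /act_word /pure_word /htuple /rhof /o4 /gw /tconj /beta /b2 /b3 /b4 /=;
gpre t u Htt Huuu; apply: tup4; geq t u Htt Huuu.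
Qed.



Lemma rhof_inj j : injective (fun i : 'I_4 => rhof j i).
Proof.
move=> i1 i2 /(congr1 val).
case: i1 => [[|[|[|[|//]]]] H1]; case: i2 => [[|[|[|[|//]]]] H2];
do 5 (case: j => [|j]; try (by move=> e; apply/val_inj));
by move=> e; apply/val_inj.
Qed.

Definition rho (j : 'I_6) : {perm 'I_4} := perm (@rhof_inj j).

Lemma rhoE j i : rho j i = rhof j i.
Proof. by rewrite /rho permE. Qed.

Lemma porb2 (p : {perm 'I_4}) f a : p f = f -> a != f ->
  (forall x, [|| x == f, x == a, x == p a | x == p (p a)]) -> #|porbits p| = 2.
Proof.
move=> pf anf hx.
have fx : forall i, (p ^+ i) f = f.
  by elim=> [|i IH]; rewrite ?expg0 ?perm1 // expgSr permM IH pf.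
have -> : porbits p = [set porbit p a; porbit p f].
  apply/setP => X; apply/imsetP/set2P => [[x _ ->]|[] ->]; last 2 first.
  - by exists a.
  - by exists f.
  case/or4P: (hx x) => /eqP ->; [by right| by left | left | left].
  - by have := porbit_perm p 1 a; rewrite expg1.
  - by have := porbit_perm p 2 a; rewrite expgS expg1 permM.
rewrite cards2 eq_porbit_mem; case: porbitP => // [[i]]; rewrite fx => e.
by rewrite e eqxx in anf.
Qed.

Lemma porbits_rho j : #|porbits (rho j)| = 2.
Proof.
case: j => [[|[|[|[|[|[|//]]]]]] Hj].
- apply: (@porb2 _ (o4 3) (o4 0)); rewrite ?rhoE //.
  by case => [[|[|[|[|//]]]] ?]; rewrite ?rhoE.
- apply: (@porb2 _ (o4 1) (o4 0)); rewrite ?rhoE //.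
  by case => [[|[|[|[|//]]]] ?]; rewrite ?rhoE.
- apply: (@porb2 _ (o4 2) (o4 0)); rewrite ?rhoE //.
  by case => [[|[|[|[|//]]]] ?]; rewrite ?rhoE.
- apply: (@porb2 _ (o4 2) (o4 0)); rewrite ?rhoE //.
  by case => [[|[|[|[|//]]]] ?]; rewrite ?rhoE.
- apply: (@porb2 _ (o4 0) (o4 1)); rewrite ?rhoE //.
  by case => [[|[|[|[|//]]]] ?]; rewrite ?rhoE.
- apply: (@porb2 _ (o4 3) (o4 0)); rewrite ?rhoE //.
  by case => [[|[|[|[|//]]]] ?]; rewrite ?rhoE.
Qed.

Lemma rho_even j : rho j \in 'Alt_('I_4).
Proof. by rewrite Alt_even /odd_perm card_ord porbits_rho. Qed.

Definition sig4 (p : {perm 'I_4}) : nat * nat := (val (p (o4 0)), val (p (o4 1))).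

Lemma gen_rho : <<[set rho j | j : 'I_6]>> = 'Alt_('I_4).
Proof.
set S := [set rho j | j : 'I_6].
pose a := rho (@Ordinal 6 0 isT); pose b := rho (@Ordinal 6 1 isT).
have aS : a \in <<S>> by apply: mem_gen; apply/imsetP; exists (@Ordinal 6 0 isT).
have bS : b \in <<S>> by apply: mem_gen; apply/imsetP; exists (@Ordinal 6 1 isT).
pose L := [:: 1; a; b; a * a; a * b; b * a; b * b; a * a * b; a * b * a; a * b * b;
             a * a * b * a; a * a * b * b].
have uL : uniq L.
  apply: (@map_uniq _ _ sig4).
  by rewrite /= /sig4 /a /b !permM !perm1 !rhoE.
have cA : #|'Alt_('I_4)| = 12.
  have := @card_Alt 'I_4; rewrite card_ord => /(_ isT).
  by move/(congr1 (fun n => n %/ 2)); rewrite mulKn.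
apply/eqP; rewrite eqEcard; apply/andP; split.
  by rewrite gen_subG; apply/subsetP => p /imsetP [j _ ->]; apply: rho_even.
rewrite cA cardE.
have -> : 12 = size L by [].
apply: uniq_leq_size => //; apply/allP; rewrite /= !mem_enum.
by repeat (apply/andP; split); repeat first [exact aS|exact bS|exact: group1|apply: groupM].
Qed.



Lemma gwG (gT : finGroupType) (G : {group gT}) t u j i :
  t \in G -> u \in G -> gw t u j i \in G.
Proof.
move=> tG uG.
case: j => [|[|[|[|[|j]]]]]; case: i => [|[|[|i]]]; rewrite /gw;
  by repeat first [exact tG|exact uG|exact: group1|apply: groupM].
Qed.

Ltac inG tG uG := repeat first [exact tG|exact uG|exact: group1|apply: groupM|apply: groupX|rewrite groupV].

Ltac memc t u Htt Huuu tG uG g := apply/imsetP; exists g;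
  [inG tG uG | gpre t u Htt Huuu; geq t u Htt Huuu].

Theorem theorem6 (gT : finGroupType) (G : {group gT}) (s1 s2 : gT) :
  G :!=: 1 -> 'Z(G) = 1 ->
  s1 \in G -> s2 \in G -> G :=: <<[set s1; s2]>> ->
  s1 * s2 * s1 = s2 * s1 * s2 -> #[s1 * s2 * s1] = 2%N ->
  let C := s1 ^: G in
  let D := (s1 * s2 * s1) ^: G in
  let h := fun i : 'I_4 => tcls G (htuple s1 s2 i) in
  let Z := [set h i | i : 'I_4] in
  (forall i, inSigma G C C C D (h i)) /\
  (forall X, (exists w : seq ('I_6 * bool), act_pure w (h (i4 0)) = X) <-> X \in Z) /\
  #|Z| = 4%N /\
  exists rho : 'I_6 -> {perm 'I_4},
    (forall (j : 'I_6) (i : 'I_4), act_pure [:: (j, false)] (h i) = h (rho j i)) /\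
    [/\ rho (j6 0) (i4 0) = i4 1, rho (j6 0) (i4 1) = i4 2,
        rho (j6 0) (i4 2) = i4 0 & rho (j6 0) (i4 3) = i4 3] /\
    [/\ rho (j6 1) (i4 0) = i4 2, rho (j6 1) (i4 2) = i4 3,
        rho (j6 1) (i4 3) = i4 0 & rho (j6 1) (i4 1) = i4 1] /\
    [/\ rho (j6 2) (i4 0) = i4 3, rho (j6 2) (i4 3) = i4 1,
        rho (j6 2) (i4 1) = i4 0 & rho (j6 2) (i4 2) = i4 2] /\
    (<<[set rho j | j : 'I_6]>> \isog ('Alt_('I_4))%G) /\
    genusZ #|Z| #|porbits (rho (j6 0))| #|porbits (rho (j6 1))| #|porbits (rho (j6 2))| = 0%R.
Proof.
move=> Gn1 ZG1 s1G s2G Ggen braid ord2 C D h Z.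
have hc : s1 * s2 != s2 * s1.
  apply/negP => /eqP c; move: Gn1; rewrite -ZG1; apply/negP; rewrite negbK.
  apply/eqP/esym/center_idP; rewrite Ggen abelian_gen.
  apply/centsP => x /set2P [] -> y /set2P [] ->;
    [exact: commute_refl | exact: c | exact: (esym c) | exact: commute_refl].
have hxy : s1 != s2 by apply: contra hc => /eqP ->.
have hy1 : s2 * s1 * s2^-1 != s2.
  apply: contra hxy => /eqP e; apply/eqP; apply: (mulgI s2); apply: (mulIg s2^-1).
  by rewrite e mulgK.
have hy2 : s2 * s1 * s2^-1 != s1.
  by apply: contra hc => /eqP e; apply/eqP; rewrite -[in LHS]e mulgKV.
have e1 := negbTE hxy.
have e2 : (s2 == s1) = false by rewrite eq_sym.
have e3 := negbTE hy1.
have e4 := negbTE hy2.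
have Htt0 : (s1 * s2 * s1) * (s1 * s2 * s1) = 1.
  by have := expg_order (s1 * s2 * s1); rewrite ord2 expgS expg1.
have Huuu0 : s1 * s2 * (s1 * s2) * (s1 * s2) = 1.
  have -> : s1 * s2 * (s1 * s2) * (s1 * s2) = (s1 * s2 * s1) * (s2 * s1 * s2).
    by rewrite !mulgA.
  by rewrite -braid.
have [t [u [Htt Huuu tG uG [E1 E2]]]] : exists t u, [/\ t * t = 1, u * u * u = 1,
    t \in G, u \in G & s1 = u^-1 * t /\ s2 = t * u * u].
  exists (s1 * s2 * s1), (s1 * s2); split => //; try by rewrite !groupM.
  split; first by rewrite invMg !mulgA mulgKV mulVg mul1g.
  by rewrite -mulgA -(uV Huuu0) braid invMg !mulgA !mulgK.
subst s1 s2.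
have hrho : forall j i, act_pure [:: (j, false)] (h i) = h (rho j i).
  move=> j i; rewrite /act_pure /pure_to_word /= cats0 /h act_cls_tcls core //.
  by rewrite tcls_conj ?rhoE //; apply: gwG.
have hrhoV : forall j i, act_pure [:: (j, true)] (h i) = h ((rho j)^-1 i).
  move=> j i; rewrite -{1}(permKV (rho j) i) -hrho /act_pure /pure_to_word /=.
  by rewrite !cats0 -act_cls_cat /h act_cls_tcls act_word_cat act_word_inv.
have hZ : forall i, h i \in Z by move=> i; apply/imsetP; exists i.
have hcard : #|Z| = 4.
  rewrite card_imset ?card_ord // => i k; rewrite /h => /bits_cls.
  case: i => [[|[|[|[|//]]]] Hi]; case: k => [[|[|[|[|//]]]] Hk];
  rewrite /bits /htuple /= ?eqxx ?e1 ?e2 ?e3 ?e4 => H;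
  first [discriminate H | by apply/val_inj].
split.
  have gen : forall a b c d, a \in G -> b \in G -> c \in G -> d \in G ->
      u^-1 * t \in [set a; b; c; d] -> t * u * u \in [set a; b; c; d] ->
      <<[set a; b; c; d]>> = G.
    move=> a b c d aG bG cG dG xA yA; apply/eqP; rewrite eqEsubset; apply/andP; split.
      by rewrite gen_subG !subUset !sub1set aG bG cG dG.
    by rewrite Ggen; apply: genS; rewrite subUset !sub1set xA yA.
  case=> [[|[|[|[|//]]]] Hi]; rewrite /h /htuple /=; do 4 eexists; split;
    try reflexivity.
  - split; [memc t u Htt Huuu tG uG (1 : gT) | memc t u Htt Huuu tG uG t
           | memc t u Htt Huuu tG uG (1 : gT) | memc t u Htt Huuu tG uG (1 : gT)].
  - by apply: gen; try (by inG tG uG); rewrite !inE eqxx ?orbT.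
  - by gpre t u Htt Huuu; geq t u Htt Huuu.
  - split; [memc t u Htt Huuu tG uG (u * t) | memc t u Htt Huuu tG uG t
           | memc t u Htt Huuu tG uG (1 : gT) | memc t u Htt Huuu tG uG (u * u * t)].
  - by apply: gen; try (by inG tG uG); rewrite !inE eqxx ?orbT.
  - by gpre t u Htt Huuu; geq t u Htt Huuu.
  - split; [memc t u Htt Huuu tG uG t | memc t u Htt Huuu tG uG (1 : gT)
           | memc t u Htt Huuu tG uG (1 : gT) | memc t u Htt Huuu tG uG (u * u * t)].
  - by apply: gen; try (by inG tG uG); rewrite !inE eqxx ?orbT.
  - by gpre t u Htt Huuu; geq t u Htt Huuu.
  - split; [memc t u Htt Huuu tG uG t | memc t u Htt Huuu tG uG t
           | memc t u Htt Huuu tG uG (1 : gT) | memc t u Htt Huuu tG uG (u * t)].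
  - by apply: gen; try (by inG tG uG); rewrite !inE eqxx ?orbT.
  - by gpre t u Htt Huuu; geq t u Htt Huuu.
split.
  move=> X; split.
    case=> w <-; elim: w (i4 0) => [|[j b] w IH] i; first by rewrite act_pure_nil.
    by rewrite act_pure_cons; case: b; [rewrite hrhoV | rewrite hrho]; apply: IH.
  case/imsetP => i _ ->; case: i => [[|[|[|[|//]]]] Hi].
  - exists [::]; rewrite act_pure_nil; congr h; apply: ord_inj.
    by rewrite /i4 inordK.
  - exists [:: (j6 0, false)]; rewrite hrho; congr h; apply: ord_inj.
    by rewrite rhoE /j6 /i4 !inordK.
  - exists [:: (j6 0, false); (j6 0, false)]; rewrite act_pure_cons !hrho; congr h.
    by apply: ord_inj; rewrite !rhoE /j6 /i4 !inordK.
  - exists [:: (j6 2, false)]; rewrite hrho; congr h; apply: ord_inj.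
    by rewrite rhoE /j6 /i4 !inordK.
split; first exact: hcard.
exists rho; split; first exact: hrho.
split; first by split; apply: ord_inj; rewrite rhoE /j6 /i4 !inordK.
split; first by split; apply: ord_inj; rewrite rhoE /j6 /i4 !inordK.
split; first by split; apply: ord_inj; rewrite rhoE /j6 /i4 !inordK.
split; first by rewrite gen_rho; apply: isog_refl.
rewrite hcard !porbits_rho /genusZ.
apply/eqP; by vm_compute.
Qed.
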